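(* Let $\iota:\emptyset\to\{\bullet\}$. Then, in $\mathrm{Top}$, $\{\iota\}^{lrrl}$ is the class of maps of the form $A\to A\sqcup B$, i.e. (up to isomorphism) inclusions of a space $A$ as a summand of a disjoint union (coproduct) $A\sqcup B$ with some space $B$.
   Context: For continuous maps $f:A\to B$, $g:C\to D$, $f\pitchfork g$ means: for all continuous $t:A\to C$, $b:B\to D$ with $g\circ t=b\circ f$ there is continuous $d:B\to C$ with $d\circ f=t$, $g\circ d=b$. For a class $P$, $P^l=\{f: f\pitchfork g\ \forall g\in P\}$, $P^r=\{g: f\pitchfork g\ \forall f\in P\}$, and $P^{lrrl}=(((P^l)^r)^r)^l$. *)

(* Defs.v *)
From HB Require Import structures.
From mathcomp Require Import all_boot all_order all_algebra.
From mathcomp Require Import all_classical all_reals all_analysis.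

Set Implicit Arguments.
Unset Strict Implicit.
Unset Printing Implicit Defensive.

Local Open Scope classical_set_scope.

Record arrow := Arrow {
  adom : topologicalType;
  acod : topologicalType;
  amap : adom -> acod;
  acont : continuous amap }.

Definition lifts (f g : arrow) : Prop :=
  forall (t : adom f -> adom g) (b : acod f -> acod g),
    continuous t -> continuous b -> @amap g \o t = b \o @amap f ->
    exists d : acod f -> adom g,
      [/\ continuous d, d \o @amap f = t & @amap g \o d = b].

Definition lorth (P : arrow -> Prop) : arrow -> Prop :=
  fun f => forall g, P g -> lifts f g.
Definition rorth (P : arrow -> Prop) : arrow -> Prop :=
  fun g => forall f, P f -> lifts f g.

(* P^{lrrl} = (((P^l)^r)^r)^l *)
Definition lrrl (P : arrow -> Prop) : arrow -> Prop :=
  lorth (rorth (rorth (lorth P))).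

(* the empty space and the one-point space (their unique topologies) *)
Definition emptySp : topologicalType := discrete_topology void.
Definition pointSp : topologicalType := discrete_topology unit.

Definition iota_fun : emptySp -> pointSp := fun v => match v with end.
Lemma iota_cont : continuous iota_fun.
Proof. by case. Qed.

Definition iota_arrow : arrow := Arrow iota_cont.

Definition homeomorphism (X Y : topologicalType) (h : X -> Y) : Prop :=
  exists g : Y -> X, [/\ continuous h, continuous g, cancel h g & cancel g h].

(* coproduct A ⊔ B in Top: the sigma-type over bool with the sum topology *)
Definition coprodSp (A B : topologicalType) : bool -> topologicalType :=
  fun b => if b then A else B.
Definition coprod (A B : topologicalType) : topologicalType :=
  {b : bool & coprodSp A B b}.
Definition inlc (A B : topologicalType) : A -> coprod A B :=
  existT (coprodSp A B) true.

Definition summand_inclusion (f : arrow) : Prop :=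
  exists (B : topologicalType) (h : acod f -> coprod (adom f) B),
    homeomorphism h /\ h \o @amap f = @inlc (adom f) B.

(* Main.v *)
Require Import Defs.
From HB Require Import structures.
From mathcomp Require Import all_boot all_order all_algebra.
From mathcomp Require Import all_classical all_reals all_analysis.
From mathcomp Require unstable.
Set Implicit Arguments. Unset Strict Implicit.
Local Open Scope classical_set_scope.

Definition sumcase (A B Z : topologicalType) (fa : A -> Z) (fb : B -> Z) :
  coprod A B -> Z :=
  mathcomp.classical.unstable.sigT_fun (fun b => if b as b' return coprodSp A B b' -> Z then fa else fb).

Lemma sumcase_cont (A B Z : topologicalType) (fa : A -> Z) (fb : B -> Z) :
  continuous fa -> continuous fb -> continuous (sumcase fa fb).
Proof. move=> ca cb; apply: sigT_continuous => -[]//. Qed.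

Lemma discrete_cont (T : choiceType) (Z : topologicalType) (g : discrete_topology T -> Z) : continuous g.
Proof. apply/continuousP => U _; exact: discrete_open. Qed.

Lemma open_settype (X : topologicalType) (B : set X) (U : set (set_type B)) :
  open U -> exists V, open V /\ U = set_val @^-1` V.
Proof. move=> [V oV <-]; by exists V. Qed.

Lemma idc (T : topologicalType) : continuous (@id T).
Proof. by move=> x. Qed.

Definition PI := fun g => g = iota_arrow.

Lemma L_inh (f : arrow) (a : adom f) : lorth PI f.
Proof. move=> g -> t b _ _ _; by case: (t a). Qed.

Lemma R_char (f : arrow) : rorth (lorth PI) f ->
  (forall c : adom f, False) \/ homeomorphism (@amap f).
Proof.
move=> Rf.
have [[c]|nc] := pselect (exists c : adom f, True); last first.
  by left => c; apply: nc; exists c.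
right.
pose f1 := @Arrow pointSp (acod f) (fun _ => @amap f c) (@cst_continuous _ _ _).
have [d [cd d1 d2]] := Rf f1 (L_inh (tt : adom f1)) (fun _ => c) id
   (@cst_continuous _ _ _) (@idc _) erefl.
have inj : injective (@amap f).
  move=> c1 c2 e.
  pose f2 := @Arrow (discrete_topology bool) pointSp (fun _ => tt) (@cst_continuous _ _ _).
  have comm : @amap f \o (fun b : discrete_topology bool => if b then c1 else c2)
      = (fun _ : pointSp => @amap f c1) \o @amap f2.
    by apply/funext => -[]//=.
  have [d' [_ e1 _]] := Rf f2 (L_inh (true : adom f2))
     (fun b : discrete_topology bool => if b then c1 else c2) (fun _ => @amap f c1)
     (@discrete_cont _ _ _) (@cst_continuous _ _ _) comm.
  have h1 := congr1 (fun F => F true) e1; have h2 := congr1 (fun F => F false) e1.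
  by rewrite /= in h1 h2; rewrite -h1 -h2.
exists d; split => //; first exact: acont.
  by move=> x; apply: inj; exact: (congr1 (fun F => F (@amap f x)) d2).
by move=> y; exact: (congr1 (fun F => F y) d2).
Qed.

Lemma sec_RR (g : arrow) (s : acod g -> adom g) : continuous s ->
  @amap g \o s = id -> rorth (rorth (lorth PI)) g.
Proof.
move=> cs gs f' Rf' t b ct cb e.
case: (R_char Rf') => [ne | [k [cf ck fk kf]]].
  exists (s \o b); split.
  - by move=> x; apply: continuous_comp; [exact: cb | exact: cs].
  - by apply/funext => x; case: (ne x).
  - by apply/funext => y /=; exact: (congr1 (fun F => F (b y)) gs).
exists (t \o k); split.
- by move=> x; apply: continuous_comp; [exact: ck | exact: ct].
- by apply/funext => x /=; rewrite fk.
- apply/funext => y /=; have := congr1 (fun F => F (k y)) e => /= ->.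
  by rewrite kf.
Qed.

Lemma RR_sec (g : arrow) : rorth (rorth (lorth PI)) g ->
  exists s, continuous s /\ @amap g \o s = id.
Proof.
move=> RRg.
have ec : continuous (fun v : emptySp => match v with end : acod g) by case.
pose e := Arrow ec.
have He : rorth (lorth PI) e.
  move=> f' Lf' t b ct cb comm.
  have comm2 : iota_fun \o t = (fun _ => tt : pointSp) \o @amap f'.
    by apply/funext => x; case: (t x).
  have [d' [cd' _ _]] := Lf' iota_arrow erefl t (fun _ => tt : pointSp) ct
     (@cst_continuous _ _ _) comm2.
  exists d'; split => //.
  - by apply/funext => x; case: (t x).
  - by apply/funext => y; case: (d' y).
have comm : @amap g \o (fun v : emptySp => match v with end : adom g) = id \o @amap e.
  by apply/funext => -[].
have [d [cd _ gd]] := RRg e He (fun v : emptySp => match v with end : adom g) id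
   ltac:(by case) (@idc _) comm.
by exists d.
Qed.

Lemma dir2 (f : arrow) : summand_inclusion f -> lrrl PI f.
Proof.
move=> [B [h [[k [ch ck hk kh]] hf]]] g RRg.
have [s [cs gs]] := RR_sec RRg.
move=> t b ct cb comm.
pose d := sumcase t (s \o b \o k \o existT (coprodSp (adom f) B) false) \o h.
exists d; split.
- move=> x; apply: continuous_comp; first exact: ch.
  apply: sumcase_cont => // y.
  apply: continuous_comp; first exact: existT_continuous.
  apply: continuous_comp; first exact: ck.
  apply: continuous_comp; first exact: cb.
  exact: cs.
- apply/funext => a; rewrite /d /=.
  by have := congr1 (fun F => F a) hf => /= ->.
- apply/funext => x; rewrite /d /=.
  rewrite -{2}(hk x); case: (h x) => -[] y /=.
  + have := congr1 (fun F => F y) comm => /= ->.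
    have := congr1 (fun F => F y) hf => /= e.
    by rewrite /inlc in e; rewrite -e hk.
  + by have := congr1 (fun F => F (b (k (existT (coprodSp (adom f) B) false y)))) gs.
Qed.

Section D1.
Variable f : arrow.
Local Notation A := (adom f).
Local Notation X := (acod f).
Local Notation fm := (@amap f).
Lemma dir1 : lrrl PI f -> summand_inclusion f.
Proof.
move=> H.
pose gm := sumcase fm (@id X).
have cg : continuous gm by apply: sumcase_cont; [exact: acont | exact: idc].
pose g := Arrow cg.
pose s : X -> coprod A X := existT (coprodSp A X) false.
have cs : continuous s by exact: (@existT_continuous _ (coprodSp A X) false).
have gs : @amap g \o s = id by [].
have RRg := @sec_RR g s cs gs.
have comm : @amap g \o @inlc A X = id \o fm by [].
have [d [cd df gd]] := H g RRg (@inlc A X) id (@existT_continuous _ _ true) (@idc _) comm.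
pose Bs : set X := [set x | projT1 (d x) = false].
pose psi := sumcase fm (@set_val X Bs).
have cpsi : continuous psi.
  apply: sumcase_cont; first exact: acont.
  exact: initial_continuous.
have dfa a : d (fm a) = existT (coprodSp A X) true a := congr1 (fun F => F a) df.
have gdx x : gm (d x) = x := congr1 (fun F => F x) gd.
have psi_inj : injective psi.
  move=> [[] p] [[] q]; rewrite /psi /sumcase /mathcomp.classical.unstable.sigT_fun /= => e.
  - have h1 := dfa p; rewrite e dfa in h1. have h2 := existT_inj2 h1. by congr existT; rewrite h2.
  - have := set_mem (valP q); rewrite /Bs /= -set_valE -e dfa //.
  - have := set_mem (valP p); rewrite /Bs /= -set_valE e dfa //.
  - by congr existT; apply: val_inj.
have psi_surj x : exists p, psi p = x.
  case E: (d x) => [[] y].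
  - exists (existT (coprodSp A (set_type Bs)) true y).
    by have := gdx x; rewrite E.
  - have Bx : Bs x by rewrite /Bs /= E.
    by exists (existT (coprodSp A (set_type Bs)) false (exist _ x (mem_set Bx))).
have [phi phiK] := choice psi_surj.
have psiK : cancel psi phi by move=> p; apply: psi_inj; rewrite phiK.
exists (set_type Bs); exists phi; split; last first.
  by apply/funext => a /=; apply: psi_inj; rewrite phiK.
exists psi; split => //.
have oBs : open Bs.
  apply: ((continuousP d).1 cd [set p | projT1 p = false]).
  apply/sigT_openP => -[].
  - rewrite (_ : _ @^-1` _ = set0); first exact: open0.
    by rewrite predeqE.
  - rewrite (_ : _ @^-1` _ = setT); first exact: openT.
    by rewrite predeqE.
apply/continuousP => W oW.
have oWt := (sigT_openP W).1 oW true.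
have oWf := (sigT_openP W).1 oW false.
have [V [oV eV]] := open_settype oWf.
have -> : phi @^-1` W = (d @^-1` (existT (coprodSp A X) true @`
   (existT (coprodSp A (set_type Bs)) true @^-1` W))) `|` (Bs `&` V).
  rewrite predeqE => x.
  case E: (d x) => [[] y].
  - have hx : phi x = existT (coprodSp A (set_type Bs)) true y.
      by apply: psi_inj; rewrite phiK -{1}(gdx x) E.
    rewrite /preimage /= hx E; split.
      by move=> Wy; left; exists y.
    case => [[z Wz e] | ]; last first. by move=> [+ _]; rewrite /Bs /= E. have h := existT_inj2 e; by rewrite -h.
  - have Bx : Bs x by rewrite /Bs /= E.
    have hx : phi x = existT (coprodSp A (set_type Bs)) false (exist _ x (mem_set Bx)).
      by apply: psi_inj; rewrite phiK.
    have := congr1 (fun S => S (exist _ x (mem_set Bx))) eV.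
    rewrite /preimage /= hx E => ->; split.
      by move=> Vx; right.
    by case => [[z _ /existT_inj1] // | [] ].
apply: openU.
  by apply: ((continuousP d).1 cd); exact: (@existT_open_map _ (coprodSp A X) true _ oWt).
exact: openI.
Qed.
End D1.

Theorem mainTheorem17 (f : arrow) :
  lrrl (fun g => g = iota_arrow) f <-> summand_inclusion f.
Proof. split; [exact: dir1 | exact: dir2]. Qed.
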